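(* Let $\Gamma=(V,E)$ be a locally finite reflexive relation and $v\in V$. If $F_1$ and $F_2$ are $v$-fragments, then $F_1\cap F_2$ and $F_1\cup F_2$ are $v$-fragments. In particular, there exists a $v$-fragment contained in every $v$-fragment.
   Context: A relation is a pair $\Gamma=(V,E)$ with $E\subset V\times V$; for $X\subset V$, $\Gamma(X)=\{y: (x,y)\in E \text{ for some } x\in X\}$, $\Gamma^-(X)=\{y:(y,x)\in E\text{ for some }x\in X\}$, $\Gamma(x)=\Gamma(\{x\})$. $\Gamma$ is reflexive if $(x,x)\in E$ for all $x$, and locally finite if $\Gamma(x)$ and $\Gamma^-(x)$ are finite for all $x$. Write $\partial(X)=\Gamma(X)\setminus X$. A set $F\subset V$ is a $v$-Moser set if $\Gamma^-(v)\cap F=\{v\}$. Let $\kappa_\Gamma(v)=\min\{|\partial(X)|: X \text{ a } v\text{-Moser set}\}$. A $v$-fragment is a $v$-Moser set $X$ with $|\partial(X)|=\kappa_\Gamma(v)$. *)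

(* Defs.v *)
From Stdlib Require Import List Arith.
Import ListNotations.

Section Rel.
Context {V : Type} (E : V -> V -> Prop).

Definition img (X : V -> Prop) : V -> Prop :=
  fun y => exists x, X x /\ E x y.
Definition preimg (X : V -> Prop) : V -> Prop :=
  fun y => exists x, X x /\ E y x.
Definition single (v : V) : V -> Prop := fun x => x = v.

Definition reflexive_rel : Prop := forall x, E x x.

Definition finite_set (A : V -> Prop) : Prop :=
  exists l : list V, forall x, A x <-> In x l.

Definition has_card (A : V -> Prop) (n : nat) : Prop :=
  exists l : list V, NoDup l /\ length l = n /\ (forall x, A x <-> In x l).

Definition locally_finite : Prop :=
  forall x, finite_set (img (single x)) /\ finite_set (preimg (single x)).

Definition bdry (X : V -> Prop) : V -> Prop := fun y => img X y /\ ~ X y.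

Definition moser (v : V) (F : V -> Prop) : Prop :=
  forall x, (preimg (single v) x /\ F x) <-> x = v.

(* k = kappa_Gamma(v): the minimum of |d(X)| over v-Moser sets X
   (sets with infinite boundary never attain/undercut a finite minimum) *)
Definition is_kappa (v : V) (k : nat) : Prop :=
  (exists X, moser v X /\ has_card (bdry X) k) /\
  (forall X m, moser v X -> has_card (bdry X) m -> k <= m).

Definition fragment (v : V) (X : V -> Prop) : Prop :=
  moser v X /\ exists k, is_kappa v k /\ has_card (bdry X) k.

End Rel.

(* Main.v *)
Require Import Defs.
From Stdlib Require Import List Arith Lia Classical ClassicalDescription.
Import ListNotations.

Section Aux.
Context {V : Type} (E : V -> V -> Prop).

Definition dec (P : Prop) : {P} + {~P} := excluded_middle_informative P.
Definition ind (P : V -> Prop) (x : V) : nat := if dec (P x) then 1 else 0.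
Fixpoint cnt (P : V -> Prop) (l : list V) : nat :=
  match l with [] => 0 | x :: l => ind P x + cnt P l end.
Definition fb (P : V -> Prop) (x : V) : bool := if dec (P x) then true else false.

Lemma fb_true P x : fb P x = true <-> P x.
Proof. unfold fb; destruct (dec (P x)) as [h|h]; split; intro; [exact h|reflexivity|discriminate|contradiction]. Qed.

Lemma cnt_len P l : length (filter (fb P) l) = cnt P l.
Proof.
  induction l as [|x l IH]; simpl; auto.
  rewrite <- IH. unfold ind; destruct (fb P x) eqn:e; simpl.
  - rewrite fb_true in e. destruct (dec (P x)); [reflexivity|contradiction].
  - destruct (dec (P x)) as [h|h]; [apply fb_true in h; congruence|reflexivity].
Qed.

Lemma hc_filter (P : V -> Prop) (L : list V) : NoDup L -> (forall x, P x -> In x L) -> has_card P (cnt P L).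
Proof.
  intros HN HL. exists (filter (fb P) L). split; [|split].
  - apply NoDup_filter; auto.
  - apply cnt_len.
  - intro x. rewrite filter_In, fb_true. firstorder.
Qed.

Lemma hc_le (P Q : V -> Prop) n m : has_card P n -> has_card Q m -> (forall x, P x -> Q x) -> n <= m.
Proof.
  intros [l [Hl [<- Hp]]] [l' [Hl' [<- Hq]]] H.
  apply NoDup_incl_length; auto. intros x Hx. apply Hq, H, Hp, Hx.
Qed.

Lemma cnt_le f g h k L :
  (forall x, ind f x + ind g x <= ind h x + ind k x) ->
  cnt f L + cnt g L <= cnt h L + cnt k L.
Proof. intros H; induction L as [|x L IH]; simpl; auto. specialize (H x); lia. Qed.

Lemma nat_min (P : nat -> Prop) : (exists n, P n) -> exists n, P n /\ forall m, P m -> n <= m.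
Proof.
  intros [n Hn].
  assert (forall k, forall n, n <= k -> P n -> exists n, P n /\ forall m, P m -> n <= m).
  { induction k as [|k IH]; intros n0 Hle Hp.
    - exists n0; split; auto. intros; lia.
    - destruct (classic (exists m, P m /\ m < n0)) as [[m [Pm Hm]]|Hno].
      + apply (IH m); auto; lia.
      + exists n0; split; auto. intros m Pm. destruct (le_lt_dec n0 m); auto.
        exfalso; apply Hno; eauto. }
  eauto.
Qed.

Lemma nat_max (P : nat -> Prop) K : P 0 -> (forall n, P n -> n <= K) ->
  exists n, P n /\ forall m, P m -> m <= n.
Proof.
  intros H0 HK.
  destruct (nat_min (fun d => exists n, P n /\ d + n = K)) as [d [[n [Pn Hd]] Hm]].
  { exists K; exists 0; split; auto; lia. }
  exists n; split; auto. intros m Pm.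
  assert (d <= K - m) by (apply Hm; exists m; split; auto; specialize (HK m Pm); lia).
  specialize (HK m Pm). lia.
Qed.

Section Logic.
Variables A B : V -> Prop.
Let I := bdry E (fun z => A z /\ B z).
Let U := bdry E (fun z => A z \/ B z).

Lemma L1 x : U x -> bdry E A x \/ bdry E B x.
Proof.
  intros [[z [[Az|Bz] Ez]] Hn].
  - left; split; [exists z; auto|tauto].
  - right; split; [exists z; auto|tauto].
Qed.
Lemma L2 x : I x -> bdry E A x \/ bdry E B x.
Proof.
  intros [[z [[Az Bz] Ez]] Hn].
  destruct (classic (A x)).
  - right; split; [exists z; auto|tauto].
  - left; split; [exists z; auto|tauto].
Qed.
Lemma L3 x : I x -> U x -> bdry E A x /\ bdry E B x.
Proof.
  intros [[z [[Az Bz] Ez]] Hn] [_ Hu].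
  split; split; try (exists z; auto); tauto.
Qed.

Lemma pw x : ind I x + ind U x <= ind (bdry E A) x + ind (bdry E B) x.
Proof.
  unfold ind.
  destruct (dec (I x)) as [Hi|Hi]; destruct (dec (U x)) as [Hu|Hu];
  destruct (dec (bdry E A x)); destruct (dec (bdry E B x)); try lia.
  all: try (destruct (L3 x Hi Hu); tauto).
  all: try (destruct (L1 x Hu); tauto).
  all: try (destruct (L2 x Hi); tauto).
Qed.
End Logic.

Lemma kappa_unique v k k' : is_kappa E v k -> is_kappa E v k' -> k = k'.
Proof.
  intros [[X [HX HcX]] H1] [[Y [HY HcY]] H2].
  specialize (H1 Y k' HY HcY). specialize (H2 X k HX HcX). lia.
Qed.

Lemma part1 v (F1 F2 : V -> Prop) : fragment E v F1 -> fragment E v F2 ->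
     fragment E v (fun x => F1 x /\ F2 x) /\
     fragment E v (fun x => F1 x \/ F2 x).
Proof.
  intros [M1 [k [Hk C1]]] [M2 [k' [Hk' C2]]].
  rewrite <- (kappa_unique _ _ _ Hk Hk') in C2. clear Hk'.
  assert (MI : moser E v (fun x => F1 x /\ F2 x)).
  { intro x; specialize (M1 x); specialize (M2 x); tauto. }
  assert (MU : moser E v (fun x => F1 x \/ F2 x)).
  { intro x; specialize (M1 x); specialize (M2 x); tauto. }
  pose proof C1 as C1'. destruct C1 as [l1 [N1 [Len1 H1]]].
  pose proof C2 as C2'. destruct C2 as [l2 [N2 [Len2 H2]]].
  set (L := nodup (fun a b => dec (a = b)) (l1 ++ l2)).
  assert (NL : NoDup L) by apply NoDup_nodup.
  assert (inL : forall x, bdry E F1 x \/ bdry E F2 x -> In x L).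
  { intros x Hx. unfold L. rewrite nodup_In, in_app_iff.
    destruct Hx as [Hx|Hx]; [left; apply H1 | right; apply H2]; auto. }
  pose proof (hc_filter (bdry E (fun z => F1 z /\ F2 z)) L NL
               (fun x Hx => inL x (L2 F1 F2 x Hx))) as HI.
  pose proof (hc_filter (bdry E (fun z => F1 z \/ F2 z)) L NL
               (fun x Hx => inL x (L1 F1 F2 x Hx))) as HU.
  pose proof (hc_filter (bdry E F1) L NL (fun x Hx => inL x (or_introl Hx))) as HA.
  pose proof (hc_filter (bdry E F2) L NL (fun x Hx => inL x (or_intror Hx))) as HB.
  assert (EA : cnt (bdry E F1) L = k).
  { apply Nat.le_antisymm; [apply (hc_le _ _ _ _ HA C1')|apply (hc_le _ _ _ _ C1' HA)]; auto. }
  assert (EB : cnt (bdry E F2) L = k).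
  { apply Nat.le_antisymm; [apply (hc_le _ _ _ _ HB C2')|apply (hc_le _ _ _ _ C2' HB)]; auto. }
  pose proof (cnt_le _ _ _ _ L (pw F1 F2)) as S.
  destruct Hk as [Hex Hmin].
  pose proof (Hmin _ _ MI HI). pose proof (Hmin _ _ MU HU).
  split; split; auto; exists k; (split; [split; auto|]).
  - replace k with (cnt (bdry E (fun z => F1 z /\ F2 z)) L) by lia. exact HI.
  - replace k with (cnt (bdry E (fun z => F1 z \/ F2 z)) L) by lia. exact HU.
Qed.

End Aux.

Theorem lemma4p1 (V : Type) (E : V -> V -> Prop)
  (Hrefl : reflexive_rel E) (Hlf : locally_finite E) (v : V) :
  (forall F1 F2 : V -> Prop, fragment E v F1 -> fragment E v F2 ->
     fragment E v (fun x => F1 x /\ F2 x) /\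
     fragment E v (fun x => F1 x \/ F2 x)) /\
  (exists F0 : V -> Prop, fragment E v F0 /\
     forall F : V -> Prop, fragment E v F -> forall x, F0 x -> F x).
Proof.
  split; [intros; apply part1; auto|].
  assert (Ms : moser E v (single v)).
  { intro x; split; [intros [_ H]; exact H|intros ->; split; [exists v; split; [reflexivity|apply Hrefl]|reflexivity]]. }
  destruct (Hlf v) as [[l Hl] _].
  set (L := nodup (fun a b => dec (a = b)) l).
  assert (Hs : has_card (bdry E (single v)) (cnt (bdry E (single v)) L)).
  { apply hc_filter; [apply NoDup_nodup|]. intros x [Hx _]. unfold L.
    rewrite nodup_In. apply Hl. exact Hx. }
  destruct (nat_min (fun m => exists X, moser E v X /\ has_card (bdry E X) m))
    as [k [[X0 [MX0 CX0]] Hkmin]]; [eauto|].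
  assert (Hk : is_kappa E v k).
  { split; eauto. }
  assert (Fr0 : fragment E v X0) by (split; eauto).
  set (X := fun x => forall F, fragment E v F -> F x).
  assert (vin : forall F, fragment E v F -> F v).
  { intros F [MF _]. apply (MF v). reflexivity. }
  assert (MX : moser E v X).
  { intro x; split.
    - intros [Hp HX]. apply (proj1 Fr0 x); split; auto. apply HX, Fr0.
    - intros ->. split; [exists v; split; [reflexivity|apply Hrefl]|]. exact vin. }
  assert (Hcov : forall l : list V, (forall y, In y l -> bdry E X y) ->
            exists G, fragment E v G /\ (forall x, X x -> G x) /\ forall y, In y l -> ~ G y).
  { induction l0 as [|y l0 IH]; intros Hin.
    - exists X0; split; auto; split; [intros x Hx; apply Hx; auto|intros y []].
    - destruct IH as [G [FG [XG NG]]]; [intros; apply Hin; simpl; auto|].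
      destruct (Hin y (or_introl eq_refl)) as [_ Hny].
      apply not_all_ex_not in Hny. destruct Hny as [F HF].
      apply imply_to_and in HF. destruct HF as [FF NFy].
      exists (fun x => G x /\ F x). split; [exact (proj1 (part1 _ _ _ _ FG FF))|]. split.
      + intros x Hx; split; [apply XG, Hx|apply Hx, FF].
      + intros z [<-|Hz] [Gz Fz]; [tauto|]. apply (NG z Hz Gz). }
  assert (Hbd : forall n, (exists l, NoDup l /\ length l = n /\ forall y, In y l -> bdry E X y) -> n <= k).
  { intros n [l0 [N0 [<- H0]]]. destruct (Hcov l0 H0) as [G [[_ [k' [Hk' CG]]] [XG NG]]].
    rewrite (kappa_unique _ _ _ _ Hk Hk').
    destruct CG as [lg [Ng [<- Hg]]]. apply NoDup_incl_length; auto.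
    intros y Hy. apply Hg. destruct (H0 y Hy) as [[x [Xx Exy]] _]. split.
    - exists x; split; auto.
    - apply NG; auto. }
  destruct (nat_max _ k (ex_intro _ [] (conj (NoDup_nil _) (conj eq_refl (fun y (H : In y []) => match H with end)))) Hbd)
    as [n [[lm [Nm [Lm Hm]]] Hmax]].
  assert (CX : has_card (bdry E X) n).
  { exists lm; split; auto; split; auto. intro y; split; auto.
    intro Hy. destruct (classic (In y lm)) as [|Hn]; auto. exfalso.
    assert (S n <= n); [|lia]. apply Hmax. exists (y :: lm). split; [constructor; auto|].
    split; [simpl; lia|]. intros z [<-|Hz]; auto. }
  assert (n <= k) by (apply Hbd; eauto).
  assert (k <= n) by (apply Hkmin; eauto).
  exists X. split.
  - split; auto. exists k; split; auto. replace k with n by lia. auto.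
  - intros F HF x Hx. apply Hx, HF.
Qed.
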